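(* In the whitened Gaussian spiked model (context), condition on the event $\mathcal{E}$. Let $S_{\mathbf{v}}^{(t)}\subset[n]$ with $|S_{\mathbf{v}}^{(t)}|\le k_{\mathbf{v}}$, let $\hat{\mathbf{v}}^{(t)}$ be a unit vector supported on $S_{\mathbf{v}}^{(t)}$, let $\mathbf{r}_{\mathbf{u}}=\widehat{\boldsymbol{\Sigma}}_{xy}\hat{\mathbf{v}}^{(t)}$, and let $S_{\mathbf{u}}^{(t+1)}$ be the index set of the $p$ largest entries of $|\mathbf{r}_{\mathbf{u}}|$, where $p\le k_{\mathbf{u}}$. Then, for a constant $C>0$ determined by the constants of the event $\mathcal{E}$, $$\|\mathbf{u}_{S_{\mathbf{u}}^{(t+1)}}\|_2\ge\sqrt{\frac{1}{s_{\mathbf{u}}(|S_{\mathbf{u}}^{(t+1)}|)}}-\frac{2C(1+\rho)}{\rho|\langle\mathbf{v},\hat{\mathbf{v}}^{(t)}\rangle|}\sqrt{\frac{(|S_{\mathbf{u}}^{(t+1)}|+|S_{\mathbf{v}}^{(t)}|)\log n}{m}}.$$ Symmetrically, if $\hat{\mathbf{u}}^{(t)}$ is a unit vector supported on $S_{\mathbf{u}}^{(t)}$ with $|S_{\mathbf{u}}^{(t)}|\le k_{\mathbf{u}}$, $\mathbf{r}_{\mathbf{v}}=\widehat{\boldsymbol{\Sigma}}_{xy}^\top\hat{\mathbf{u}}^{(t)}$, and $S_{\mathbf{v}}^{(t+1)}$ is the index set of the $q\le k_{\mathbf{v}}$ largest entries of $|\mathbf{r}_{\mathbf{v}}|$,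 then $$\|\mathbf{v}_{S_{\mathbf{v}}^{(t+1)}}\|_2\ge\sqrt{\frac{1}{s_{\mathbf{v}}(|S_{\mathbf{v}}^{(t+1)}|)}}-\frac{2C(1+\rho)}{\rho|\langle\mathbf{u},\hat{\mathbf{u}}^{(t)}\rangle|}\sqrt{\frac{(|S_{\mathbf{u}}^{(t)}|+|S_{\mathbf{v}}^{(t+1)}|)\log n}{m}}.$$
   Context: Model: $m$ i.i.d. samples $(\mathbf{x}_i,\mathbf{y}_i)$ from a zero-mean jointly Gaussian law on $\mathbb{R}^n\times\mathbb{R}^n$ with $\boldsymbol{\Sigma}_{xx}=\boldsymbol{\Sigma}_{yy}=\mathbf{I}_n$, $\boldsymbol{\Sigma}_{xy}=\rho\mathbf{u}\mathbf{v}^\top$, $\rho\in(0,1)$, $\|\mathbf{u}\|_2=\|\mathbf{v}\|_2=1$, $\|\mathbf{u}\|_0\le k_{\mathbf{u}}$, $\|\mathbf{v}\|_0\le k_{\mathbf{v}}$. $\widehat{\boldsymbol{\Sigma}}_{xy}=\frac1m\sum_i\mathbf{x}_i\mathbf{y}_i^\top$, $\mathbf{W}=\widehat{\boldsymbol{\Sigma}}_{xy}-\rho\mathbf{u}\mathbf{v}^\top$. Event $\mathcal{E}$: for all $S_1,S_2\subset[n]$ with $|S_1|\le k_{\mathbf{u}}$, $|S_2|\le k_{\mathbf{v}}$, $\|\mathbf{W}_{S_1,S_2}\|_2\le C'\sqrt{((|S_1|+|S_2|)\log n+c'\log n)/m}$ for fixed constants $C',c'>0$ (submatrix, spectral norm).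 $\mathbf{x}_S$ is the subvector on $S$. Structure functions: $s_{\mathbf{u}}(p)=(\sum_{i=1}^pu_{(i)}^2)^{-1}$, $s_{\mathbf{v}}(q)=(\sum_{j=1}^qv_{(j)}^2)^{-1}$, where $u_{(i)}$ is the $i$-th largest entry of $\mathbf{u}$ in absolute value. *)

(* Defs.v *)
From HB Require Import structures.
From mathcomp Require Import all_boot all_order all_algebra.
From mathcomp Require Import all_classical all_reals.
From mathcomp Require Import exp.
Set Implicit Arguments. Unset Strict Implicit. Unset Printing Implicit Defensive.
Import Order.TTheory GRing.Theory Num.Theory.
Local Open Scope ring_scope.
Local Open Scope classical_set_scope.

Section Defs.
Variable R : realType.

Definition norm2 {q : nat} (x : 'cV[R]_q) : R :=
  Num.sqrt (\sum_(i < q) x i 0 ^+ 2).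

Definition subnorm2 {n : nat} (x : 'cV[R]_n) (S : {set 'I_n}) : R :=
  Num.sqrt (\sum_(i in S) x i 0 ^+ 2).

Definition inner {n : nat} (x y : 'cV[R]_n) : R := \sum_(i < n) x i 0 * y i 0.

Definition specnorm {p q : nat} (A : 'M[R]_(p, q)) : R :=
  sup [set norm2 (A *m x) | x in [set x : 'cV[R]_q | norm2 x = 1]].

Definition submx {n : nat} (S1 S2 : {set 'I_n}) (W : 'M[R]_n)
  : 'M[R]_(#|S1|, #|S2|) :=
  \matrix_(i < #|S1|, j < #|S2|) W (enum_val i) (enum_val j).

Definition supported_on {n : nat} (x : 'cV[R]_n) (S : {set 'I_n}) : Prop :=
  forall i, i \notin S -> x i 0 = 0.

(* sum_{i=1}^p x_{(i)}^2, where x_{(i)} is the i-th largest entry in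
   absolute value. *)
Definition top_sq_sum {n : nat} (x : 'cV[R]_n) (p : nat) : R :=
  \sum_(a <- take p (sort (fun a b : R => b <= a)
                          [seq `|x i 0| | i <- enum 'I_n])) a ^+ 2.

Definition sfun {n : nat} (x : 'cV[R]_n) (p : nat) : R := (top_sq_sum x p)^-1.

Definition top_index_set {n : nat} (r : 'cV[R]_n) (p : nat) (S : {set 'I_n})
  : Prop :=
  #|S| = p /\ forall i j, i \in S -> j \notin S -> `|r j 0| <= `|r i 0|.

Definition l0 {n : nat} (x : 'cV[R]_n) : nat := #|[set i | x i 0 != 0]|.

Definition sample_cross_cov {n m : nat} (X Y : 'I_m -> 'cV[R]_n) : 'M[R]_n :=
  (m%:R)^-1 *: \sum_(i < m) (X i *m (Y i)^T).

Definition event_E {n : nat} (m ku kv : nat) (C' c' : R) (W : 'M[R]_n) : Prop :=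
  forall S1 S2 : {set 'I_n}, (#|S1| <= ku)%N -> (#|S2| <= kv)%N ->
    specnorm (submx S1 S2 W) <=
      C' * Num.sqrt (((#|S1| + #|S2|)%:R * ln (n%:R) + c' * ln (n%:R)) / m%:R).

End Defs.

(* Main.v *)
Require Import Defs.
From HB Require Import structures.
From mathcomp Require Import all_boot all_order all_algebra.
From mathcomp Require Import all_classical all_reals.
From mathcomp Require Import exp.
From mathcomp Require Import ring lra.
Set Implicit Arguments. Unset Strict Implicit.
Import Order.TTheory GRing.Theory Num.Theory.
Local Open Scope ring_scope.

Section Helpers.
Variable R : realType.

Lemma cs (I : finType) (P : pred I) (x y : I -> R) :
  \sum_(i | P i) x i * y i <=
  Num.sqrt (\sum_(i | P i) x i ^+ 2) * Num.sqrt (\sum_(i | P i) y i ^+ 2).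
Proof.
set A := \sum_(i | P i) x i ^+ 2; set B := \sum_(i | P i) y i ^+ 2.
set S := \sum_(i | P i) x i * y i.
have A0 : 0 <= A by apply: sumr_ge0 => i _; exact: sqr_ge0.
have B0 : 0 <= B by apply: sumr_ge0 => i _; exact: sqr_ge0.
set a := Num.sqrt A; set b := Num.sqrt B.
have a0 : 0 <= a by exact: sqrtr_ge0.
have b0 : 0 <= b by exact: sqrtr_ge0.
have aA : a ^+ 2 = A by exact: sqr_sqrtr.
have bB : b ^+ 2 = B by exact: sqr_sqrtr.
have key : 0 <= \sum_(i | P i) (b * x i - a * y i) ^+ 2.
  by apply: sumr_ge0 => i _; exact: sqr_ge0.
have E : \sum_(i | P i) (b * x i - a * y i) ^+ 2 = b ^+ 2 * A + a ^+ 2 * B - (2 * a * b) * S.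
  rewrite /A /B /S !mulr_sumr -big_split /= -sumrB.
  by apply: eq_bigr => i _; ring.
rewrite E aA bB in key.
have [a_eq0|a_gt0] := eqVneq a 0.
  have : A == 0 by rewrite -aA a_eq0 expr2 mulr0.
  move/eqP/psumr_eq0P => H.
  have -> : S = 0.
    rewrite /S big1 // => i Pi; have := H (fun j _ => sqr_ge0 _) i Pi.
    move=> /eqP; rewrite sqrf_eq0 => /eqP ->; by rewrite mul0r.
  by rewrite mulr_ge0.
have [b_eq0|b_gt0] := eqVneq b 0.
  have : B == 0 by rewrite -bB b_eq0 expr2 mulr0.
  move/eqP/psumr_eq0P => H.
  have -> : S = 0.
    rewrite /S big1 // => i Pi; have := H (fun j _ => sqr_ge0 _) i Pi.
    move=> /eqP; rewrite sqrf_eq0 => /eqP ->; by rewrite mulr0.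
  by rewrite mulr_ge0.
have ab : 0 < a * b by rewrite mulr_gt0 // lt0r ?a_gt0 ?b_gt0.
rewrite -aA -bB in key.
have : (a * b) * S <= (a * b) * (a * b) by nra.
by rewrite ler_pM2l.
Qed.

Lemma tri (I : finType) (P : pred I) (x y : I -> R) :
  Num.sqrt (\sum_(i | P i) (x i + y i) ^+ 2) <=
  Num.sqrt (\sum_(i | P i) x i ^+ 2) + Num.sqrt (\sum_(i | P i) y i ^+ 2).
Proof.
have A0 : 0 <= \sum_(i | P i) x i ^+ 2 by apply: sumr_ge0 => i _; exact: sqr_ge0.
have B0 : 0 <= \sum_(i | P i) y i ^+ 2 by apply: sumr_ge0 => i _; exact: sqr_ge0.
have r0 : 0 <= Num.sqrt (\sum_(i | P i) x i ^+ 2) + Num.sqrt (\sum_(i | P i) y i ^+ 2).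
  by rewrite addr_ge0 // sqrtr_ge0.
rewrite -(ger0_norm r0) -sqrtr_sqr ler_sqrt ?sqr_ge0 //.
have -> : \sum_(i | P i) (x i + y i) ^+ 2 =
  \sum_(i | P i) x i ^+ 2 + 2 * \sum_(i | P i) x i * y i + \sum_(i | P i) y i ^+ 2.
  rewrite mulr_sumr -!big_split /=; apply: eq_bigr => i _; ring.
rewrite sqrrD !sqr_sqrtr //.
have := @cs _ P x y; lra.
Qed.


Lemma scl (I : finType) (P : pred I) (x : I -> R) (a : R) :
  Num.sqrt (\sum_(i | P i) (a * x i) ^+ 2) = `|a| * Num.sqrt (\sum_(i | P i) x i ^+ 2).
Proof.
under eq_bigr do rewrite exprMn.
by rewrite -mulr_sumr sqrtrM ?sqr_ge0 // sqrtr_sqr.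
Qed.

Lemma top_exists n (u : 'cV[R]_n) p : (p <= n)%N ->
  exists T : {set 'I_n}, #|T| = p /\ \sum_(i in T) u i 0 ^+ 2 = top_sq_sum u p.
Proof.
move=> pn; rewrite /top_sq_sum sort_map.
set s := sort _ (enum 'I_n).
have us : uniq s by rewrite sort_uniq enum_uniq.
have sz : size s = n by rewrite size_sort size_enum_ord.
have ut : uniq (take p s) by exact: take_uniq.
exists [set i in take p s]; split.
  by rewrite cardsE (card_uniqP ut) size_takel // sz.
rewrite -map_take big_map (big_uniq _ ut).
apply: eq_big => [i|i _]; first by rewrite inE.
by rewrite real_normK // num_real.
Qed.


Lemma sq_le (a b : R) : `|a| <= `|b| -> a ^+ 2 <= b ^+ 2.
Proof.
move=> h; rewrite -(real_normK (num_real a)) -(real_normK (num_real b)).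
have := normr_ge0 a; nra.
Qed.

Lemma swap_le n (r : 'cV[R]_n) p (S T : {set 'I_n}) :
  top_index_set r p S -> #|T| = p ->
  \sum_(i in T) r i 0 ^+ 2 <= \sum_(i in S) r i 0 ^+ 2.
Proof.
move=> [cS hS] cT.
rewrite [in X in X <= _](big_setID (A:=T) S) [in X in _ <= X](big_setID (A:=S) T) /= finset.setIC lerD2l.
set c := \big[Order.max/0]_(j in T :\: S) r j 0 ^+ 2.
have card : #|T :\: S| = #|S :\: T| by rewrite !cardsD finset.setIC cS cT.
apply: (@le_trans _ _ (c *+ #|T :\: S|)).
  rewrite -sumr_const; apply: ler_sum => j Hj; exact: le_bigmax_cond.
rewrite card -sumr_const; apply: ler_sum => i; rewrite inE => /andP [niT iS].
apply: bigmax_le => [|j]; first exact: sqr_ge0.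
rewrite inE => /andP [njS jT]; apply: sq_le; exact: hS.
Qed.


Lemma sum_supp n (Sv : {set 'I_n}) (f : 'I_n -> R) :
  (forall k, k \notin Sv -> f k = 0) -> \sum_(k in Sv) f k = \sum_k f k.
Proof.
move=> h; rewrite [RHS](bigID (fun k => k \in Sv)) /= [X in _ + X]big1 ?addr0 //.
Qed.

Lemma frob_bound a b (A : 'M[R]_(a, b)) (x : 'cV[R]_b) : norm2 x = 1 ->
  norm2 (A *m x) <= Num.sqrt (\sum_i \sum_j A i j ^+ 2).
Proof.
move=> hx; rewrite /norm2 ler_sqrt; last first.
  by apply: sumr_ge0 => i _; apply: sumr_ge0 => j _; exact: sqr_ge0.
apply: ler_sum => i _; rewrite mxE.
move: hx; rewrite /norm2 => hx.
set s := \sum_(j < b) A i j * x j 0.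
set F := \sum_(j < b) A i j ^+ 2.
have h1 : s <= Num.sqrt F.
  have := @cs _ predT (fun j => A i j) (fun j => x j 0).
  by rewrite hx mulr1.
have h2 : - s <= Num.sqrt F.
  have := @cs _ predT (fun j => - A i j) (fun j => x j 0).
  have e1 : \sum_(j < b) (- A i j) ^+ 2 = F by apply: eq_bigr => j _; rewrite sqrrN.
  have e2 : \sum_(j < b) (- A i j) * x j 0 = - s.
    by rewrite /s -sumrN; apply: eq_bigr => j _; rewrite mulNr.
  by rewrite e1 e2 hx mulr1.
have F0 : 0 <= F by apply: sumr_ge0 => j _; exact: sqr_ge0.
have t0 := sqrtr_ge0 F; have tt := sqr_sqrtr F0.
rewrite -tt; nra.
Qed.

Lemma spec_ub a b (A : 'M[R]_(a, b)) :
  has_ubound [set norm2 (A *m x) | x in [set x : 'cV[R]_b | norm2 x = 1]]%classic.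
Proof.
exists (Num.sqrt (\sum_i \sum_j A i j ^+ 2)) => y [x hx <-].
exact: frob_bound.
Qed.

Lemma spec_le a b (A : 'M[R]_(a, b)) (x : 'cV[R]_b) : norm2 x = 1 ->
  norm2 (A *m x) <= specnorm A.
Proof.
move=> hx; have := ub_le_sup (spec_ub A); move=> /(_ (norm2 (A *m x))); apply; by exists x.
Qed.

Lemma norm2_ge0 q (x : 'cV[R]_q) : 0 <= norm2 x.
Proof. exact: sqrtr_ge0. Qed.

Lemma spec_ge0 a b (A : 'M[R]_(a, b)) : 0 <= specnorm A.
Proof.
case: (pselect (exists x : 'cV[R]_b, norm2 x = 1)) => [[x hx]|nx].
  exact: (le_trans (norm2_ge0 (A *m x)) (spec_le A hx)).
rewrite /specnorm.
have -> : [set norm2 (A *m x) | x in [set x : 'cV[R]_b | norm2 x = 1]]%classic = set0.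
  apply/seteqP; split => y //= [x hx _]; apply: nx; by exists x.
by rewrite sup0.
Qed.


Lemma norm2Z q (c : R) (x : 'cV[R]_q) : norm2 (c *: x) = `|c| * norm2 x.
Proof.
rewrite /norm2 -(@scl _ predT); congr Num.sqrt; apply: eq_bigr => i _; by rewrite mxE.
Qed.

Lemma norm2_eq0 q (x : 'cV[R]_q) : norm2 x = 0 -> x = 0.
Proof.
move/eqP; rewrite sqrtr_eq0 => h.
have h0 : \sum_(i < q) x i 0 ^+ 2 = 0.
  by apply: le_anti; rewrite h sumr_ge0 // => i _; exact: sqr_ge0.
have := psumr_eq0P (fun i _ => sqr_ge0 (x i 0)) h0 => H.
apply/matrixP => i j; rewrite (ord1 j) mxE.
by have /eqP := H i isT; rewrite sqrf_eq0 => /eqP.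
Qed.

Lemma norm20 q : norm2 (0 : 'cV[R]_q) = 0.
Proof. by rewrite /norm2 big1 ?sqrtr0 // => i _; rewrite mxE expr2 mul0r. Qed.

Lemma spec_scale a b (A : 'M[R]_(a, b)) (x : 'cV[R]_b) :
  norm2 (A *m x) <= specnorm A * norm2 x.
Proof.
case: (eqVneq (norm2 x) 0) => [h|h].
  by rewrite h mulr0 (norm2_eq0 h) mulmx0 norm20.
have c0 : 0 < norm2 x by rewrite lt0r h norm2_ge0.
have ny : norm2 ((norm2 x)^-1 *: x) = 1.
  by rewrite norm2Z ger0_norm ?invr_ge0 ?norm2_ge0 // mulVf.
have := spec_le A ny; rewrite -scalemxAr norm2Z ger0_norm ?invr_ge0 ?norm2_ge0 //.
by rewrite mulrC ler_pdivrMr.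
Qed.

Lemma spec_tr a b (A : 'M[R]_(a, b)) (y : 'cV[R]_a) : norm2 y = 1 ->
  norm2 (A^T *m y) <= specnorm A.
Proof.
move=> hy; set z := A^T *m y.
have zj : forall j, z j 0 = \sum_i A i j * y i 0.
  by move=> j; rewrite !mxE; apply: eq_bigr => i _; rewrite mxE.
have e : norm2 z ^+ 2 = \sum_i y i 0 * (A *m z) i 0.
  rewrite /norm2 sqr_sqrtr; last by apply: sumr_ge0 => i _; exact: sqr_ge0.
  transitivity (\sum_j z j 0 * \sum_i A i j * y i 0).
    by apply: eq_bigr => j _; rewrite expr2 {2}zj.
  under eq_bigr do rewrite mulr_sumr.
  rewrite exchange_big /=; apply: eq_bigr => i _; rewrite mxE mulr_sumr.
  by apply: eq_bigr => j _; ring.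
have c := @cs _ predT (fun i => y i 0) (fun i => (A *m z) i 0).
move: hy; rewrite /norm2 => hy; rewrite hy mul1r in c.
have sp := spec_scale A z; move: sp e; rewrite /norm2 => sp e.
have s0 := spec_ge0 A.
have z0 := norm2_ge0 z; move: z0; rewrite /norm2 => z0.
nra.
Qed.

Lemma sub_bound n (M : 'M[R]_n) (vh : 'cV[R]_n) (Sv S : {set 'I_n}) :
  norm2 vh = 1 -> supported_on vh Sv ->
  subnorm2 (M *m vh) S <= specnorm (Defs.submx S Sv M).
Proof.
move=> hv hs.
set y : 'cV[R]_#|Sv| := \col_j vh (enum_val j) 0.
have ny : norm2 y = 1.
  rewrite -hv /norm2; congr Num.sqrt.
  under eq_bigr do rewrite mxE.
  rewrite -(@big_enum_val _ _ _ _ (mem Sv) (fun k => vh k 0 ^+ 2)) /=; apply: sum_supp => k hk.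
  by rewrite hs // expr2 mul0r.
suff -> : subnorm2 (M *m vh) S = norm2 (Defs.submx S Sv M *m y) by exact: spec_le.
rewrite /subnorm2 /norm2 big_enum_val /=; congr Num.sqrt.
apply: eq_bigr => i _; congr (_ ^+ 2).
rewrite !mxE.
under [RHS]eq_bigr do rewrite !mxE.
rewrite -(@big_enum_val _ _ _ _ (mem Sv) (fun k => M (enum_val i) k * vh k 0)) /=.
rewrite sum_supp // => k hk; by rewrite hs // mulr0.
Qed.


Lemma core n (uu vh : 'cV[R]_n) (E : 'M[R]_n) (a : R) p (S : {set 'I_n}) (Bd : R) :
  a != 0 -> (p <= n)%N -> top_index_set (a *: uu + E *m vh) p S ->
  (forall T : {set 'I_n}, #|T| = p -> subnorm2 (E *m vh) T <= Bd) ->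
  Num.sqrt (top_sq_sum uu p) - 2 * Bd / `|a| <= subnorm2 uu S.
Proof.
move=> a0 pn top hB.
have [T [cT eT]] := top_exists uu pn.
have cS : #|S| = p by case: top.
set e := E *m vh; set r := a *: uu + e.
have rE : forall i, r i 0 = a * uu i 0 + e i 0 by move=> i; rewrite !mxE.
have hsw := swap_le top cT.
have h1 : subnorm2 r T <= subnorm2 r S.
  by rewrite /subnorm2 ler_sqrt // sumr_ge0 // => i _; exact: sqr_ge0.
have h2 : subnorm2 r S <= `|a| * subnorm2 uu S + subnorm2 e S.
  rewrite /subnorm2; under eq_bigr do rewrite rE.
  have := @tri _ (mem S) (fun i => a * uu i 0) (fun i => e i 0).
  by rewrite scl.
have h3 : `|a| * subnorm2 uu T <= subnorm2 r T + subnorm2 e T.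
  rewrite /subnorm2 -(@scl _ (mem T)).
  have := @tri _ (mem T) (fun i => r i 0) (fun i => - e i 0).
  have -> : \sum_(i in T) (r i 0 + - e i 0) ^+ 2 = \sum_(i in T) (a * uu i 0) ^+ 2.
    by apply: eq_bigr => i _; rewrite rE; congr (_ ^+ 2); ring.
  have -> : \sum_(i in T) (- e i 0) ^+ 2 = \sum_(i in T) e i 0 ^+ 2.
    by apply: eq_bigr => i _; rewrite sqrrN.
  done.
have hN := hB S cS; have hM := hB T cT.
have -> : Num.sqrt (top_sq_sum uu p) = subnorm2 uu T by rewrite -eT.
have ap : 0 < `|a| by rewrite normr_gt0.
have key : `|a| * subnorm2 uu T <= `|a| * (subnorm2 uu S + 2 * Bd / `|a|).
  rewrite mulrDr [X in _ <= _ + X]mulrC -!mulrA mulVf ?mulr1; last by rewrite normr_eq0.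
  lra.
rewrite ler_pM2l // in key; lra.
Qed.


Lemma bd_arith (C' c' : R) (k : nat) (l m : R) :
  0 < C' -> 0 < c' -> (1 <= k)%N -> 0 <= l -> 0 < m ->
  C' * Num.sqrt ((k%:R * l + c' * l) / m) <= C' * (1 + c') * Num.sqrt (k%:R * l / m).
Proof.
move=> C0 c0 k1 l0 m0.
have x1 : 1 <= k%:R :> R by rewrite ler1n.
have c10 : 0 <= 1 + c' by lra.
rewrite -mulrA ler_pM2l // -(ger0_norm c10) -sqrtr_sqr -sqrtrM ?sqr_ge0 //.
rewrite ler_sqrt; last first.
  rewrite mulr_ge0 ?sqr_ge0 // divr_ge0 ?(ltW m0) // mulr_ge0 //; lra.
rewrite mulrA ler_pM2r ?invr_gt0 //.
have h1 : 0 <= c' * (k%:R * l - l).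
  apply: mulr_ge0; first exact: ltW.
  rewrite subr_ge0; nra.
have kl : 0 <= k%:R * l by apply: mulr_ge0 => //; lra.
have h2 : 0 <= c' ^+ 2 * (k%:R * l) by apply: mulr_ge0 => //; exact: sqr_ge0.
have h3 : 0 <= c' * (k%:R * l) by apply: mulr_ge0 => //; exact: ltW.
have -> : (1 + c') ^+ 2 * (k%:R * l) = k%:R * l + c' * (k%:R * l) + c' * (k%:R * l) + c' ^+ 2 * (k%:R * l) by ring.
nra.
Qed.

Lemma uvT_mul n (uu ww vh : 'cV[R]_n) : (uu *m ww^T) *m vh = inner ww vh *: uu.
Proof.
rewrite -mulmxA.
have -> : ww^T *m vh = (inner ww vh)%:M.
  apply/matrixP => i j; rewrite (ord1 i) (ord1 j) !mxE eqxx mulr1n /inner.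
  by apply: eq_bigr => k _; rewrite mxE.
by rewrite mul_mx_scalar.
Qed.

Lemma spec_trmx a b (A : 'M[R]_(a, b)) : specnorm A^T <= specnorm A.
Proof.
case: (pselect (exists y : 'cV[R]_a, norm2 y = 1)) => [[y hy]|ny].
  apply: ge_sup; first by exists (norm2 (A^T *m y)), y.
  by move=> z [y' hy' <-]; exact: spec_tr.
rewrite {1}/specnorm.
have -> : [set norm2 (A^T *m x) | x in [set x : 'cV[R]_a | norm2 x = 1]]%classic = set0.
  apply/seteqP; split => z //= [x hx _]; apply: ny; by exists x.
by rewrite sup0 spec_ge0.
Qed.

Lemma part n m (C' c' rho : R) (uu ww vh : 'cV[R]_n) (W M : 'M[R]_n)
    (S : {set 'I_n}) p k :
  0 < C' -> 0 < c' -> (0 < m)%N -> 0 < rho -> (1 <= k)%N -> (0 < n)%N ->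
  inner ww vh != 0 -> top_index_set (M *m vh) p S ->
  M *m vh = (rho * inner ww vh) *: uu + W *m vh ->
  (forall T : {set 'I_n}, #|T| = p -> subnorm2 (W *m vh) T <=
      C' * Num.sqrt ((k%:R * ln (n%:R) + c' * ln (n%:R)) / m%:R)) ->
  Num.sqrt ((sfun uu p)^-1)
    - (2 * (C' * (1 + c')) * (1 + rho)) / (rho * `|inner ww vh|)
      * Num.sqrt ((k%:R * ln (n%:R)) / m%:R) <= subnorm2 uu S.
Proof.
move=> C0 c0 m0 r0 k1 n0 nz top eM hB.
have pn : (p <= n)%N.
  by case: (top) => <- _; rewrite -[X in (_ <= X)%N](card_ord n) max_card.
rewrite eM in top.
have a0 : rho * inner ww vh != 0 by rewrite mulf_neq0 // gt_eqF.
have := core a0 pn top hB.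
rewrite /sfun invrK.
set s := Num.sqrt _.
set Bd := C' * _.
set t := Num.sqrt (k%:R * ln n%:R / m%:R).
have l0 : 0 <= ln (n%:R : R) by rewrite ln_ge0 // ler1n.
have hb : Bd <= C' * (1 + c') * t by apply: bd_arith => //; rewrite ltr0n.
have t0 : 0 <= t by exact: sqrtr_ge0.
have D0 : 0 < rho * `|inner ww vh| by rewrite mulr_gt0 // normr_gt0.
rewrite normrM (gtr0_norm r0).
have : 2 * Bd / (rho * `|inner ww vh|) <=
       2 * (C' * (1 + c')) * (1 + rho) / (rho * `|inner ww vh|) * t.
  rewrite [X in _ <= X]mulrAC ler_pM2r ?invr_gt0 //.
  have : 0 <= C' * (1 + c') by rewrite mulr_ge0 ?ltW //; lra.
  move=> K0; have Kt : 0 <= C' * (1 + c') * t by apply: mulr_ge0.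
  have rKt : 0 <= rho * (C' * (1 + c') * t) by apply: mulr_ge0 => //; exact: ltW.
  have -> : 2 * (C' * (1 + c')) * (1 + rho) * t = 2 * (C' * (1 + c') * t) + 2 * (rho * (C' * (1 + c') * t)) by ring.
  lra.
lra.
Qed.


Lemma decomp n (S' : 'M[R]_n) (rho : R) (uu ww vh : 'cV[R]_n) :
  S' *m vh = (rho * inner ww vh) *: uu + (S' - rho *: (uu *m ww^T)) *m vh.
Proof. by rewrite mulmxBl -scalemxAl uvT_mul scalerA addrC subrK. Qed.

Lemma card_pos n (S : {set 'I_n}) (x : 'cV[R]_n) :
  norm2 x = 1 -> supported_on x S -> (0 < #|S|)%N /\ (0 < n)%N.
Proof.
move=> nx sx.
have S0 : (0 < #|S|)%N.
  rewrite card_gt0; apply/negP => /eqP e.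
  have x0 : x = 0.
    apply/matrixP => i j; rewrite (ord1 j) mxE; apply: sx; by rewrite e inE.
  by move: nx; rewrite x0 norm20 => /eqP; rewrite eq_sym oner_eq0.
split => //; apply: leq_trans S0 _.
by rewrite -[X in (_ <= X)%N](card_ord n) max_card.
Qed.

End Helpers.

Theorem proposition4 (R : realType) (C' c' : R) (hC' : 0 < C') (hc' : 0 < c') :
  exists C : R, 0 < C /\
  forall (n m ku kv : nat) (rho : R) (u v : 'cV[R]_n)
         (X Y : 'I_m -> 'cV[R]_n),
    (0 < m)%N ->
    0 < rho -> rho < 1 ->
    norm2 u = 1 -> norm2 v = 1 ->
    (l0 u <= ku)%N -> (l0 v <= kv)%N ->
    let Sig := sample_cross_cov X Y in
    event_E m ku kv C' c' (Sig - rho *: (u *m v^T)) ->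
    (forall (Sv : {set 'I_n}) (vh : 'cV[R]_n) (p : nat) (Su' : {set 'I_n}),
       (#|Sv| <= kv)%N -> norm2 vh = 1 -> supported_on vh Sv ->
       inner v vh != 0 ->
       (p <= ku)%N -> top_index_set (Sig *m vh) p Su' ->
       subnorm2 u Su' >=
         Num.sqrt ((sfun u #|Su'|)^-1)
         - (2 * C * (1 + rho)) / (rho * `|inner v vh|)
           * Num.sqrt (((#|Su'| + #|Sv|)%:R * ln (n%:R)) / m%:R))
    /\
    (forall (Su : {set 'I_n}) (uh : 'cV[R]_n) (q : nat) (Sv' : {set 'I_n}),
       (#|Su| <= ku)%N -> norm2 uh = 1 -> supported_on uh Su ->
       inner u uh != 0 ->
       (q <= kv)%N -> top_index_set (Sig^T *m uh) q Sv' ->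
       subnorm2 v Sv' >=
         Num.sqrt ((sfun v #|Sv'|)^-1)
         - (2 * C * (1 + rho)) / (rho * `|inner u uh|)
           * Num.sqrt (((#|Su| + #|Sv'|)%:R * ln (n%:R)) / m%:R)).
Proof.
exists (C' * (1 + c')); split; first by apply: mulr_gt0 => //; lra.
move=> n m ku kv rho u v X Y m0 r0 r1 nu nv lu lv Sig hE.
set W := Sig - rho *: (u *m v^T).
split.
- move=> Sv vh p Su' cSv nvh svh nz pku top.
  have cS : #|Su'| = p by case: top.
  have [Sv0 n0] := card_pos nvh svh.
  rewrite cS.
  apply: (part (M := Sig) (W := W)) => //.
  + by rewrite addn_gt0 Sv0 orbT.
  + exact: decomp.
  + move=> T cT; apply: le_trans (sub_bound W T nvh svh) _.
    by rewrite -cT; apply: hE => //; rewrite cT.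
- move=> Su uh q Sv' cSu nuh suh nz qkv top.
  have cS : #|Sv'| = q by case: top.
  have [Su0 n0] := card_pos nuh suh.
  rewrite cS.
  apply: (part (M := Sig^T) (W := W^T)) => //.
  + by rewrite addn_gt0 Su0.
  + have -> : W^T = Sig^T - rho *: (v *m u^T).
      by rewrite /W linearB /= [X in _ - X]linearZ /= trmx_mul trmxK.
    exact: decomp.
  + move=> T cT; apply: le_trans (sub_bound W^T T nuh suh) _.
    have -> : Defs.submx T Su W^T = (Defs.submx Su T W)^T by apply/matrixP => i j; rewrite !mxE.
    apply: le_trans (spec_trmx _) _.
    by rewrite -cT; apply: hE => //; rewrite cT.
Qed.
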